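(* Let $x_0(u_0,v_0)$ be a non-developable surface with unit normal $N_0$ and let $x_z(u_1,v_1)$ be a surface such that, on the set $S:=\{(u_0,v_0,u_1,v_1):(x_z(u_1,v_1)-x_0(u_0,v_0))^TN_0(u_0,v_0)=0\}$ (assumed to be a $3$-dimensional submanifold on which $(\partial_{u_1}x_z)^TN_0\,(\partial_{v_1}x_z)^TN_0\neq0$), one has $$(I_3-N_0N_0^T)\big[\partial_{u_1}x_z(\partial_{v_1}x_z)^T+\partial_{v_1}x_z(\partial_{u_1}x_z)^T\big]N_0=(\partial^2_{u_1v_1}x_z)^TN_0\,(x_z-x_0).$$ Then the function $(\partial_{u_1}x_z)^TN_0\,(\partial_{v_1}x_z)^TN_0$ restricted to $S$ depends only on $(u_1,v_1)$, i.e. it is constant as $(u_0,v_0)$ moves along the curve of contact of $x_0$ with the tangent cone from the fixed point $x_z(u_1,v_1)$. Consequently, for any deformation $x^0$ of $x_0$, the leaves $x^1$ of the associated B\''acklund transformation have linear element $|dx^1|^2=|dx_z|^2-4(\partial_{u_1}x_z)^TN_0(\partial_{v_1}x_z)^TN_0\,du_1\,dv_1$, independent of the shape of $x^0$.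
   Context: Work in $\mathbb{C}^3$ with the complex bilinear product $x^Ty$ and $|x|^2:=x^Tx$; a surface is a map with $dx\times\wedge dx\neq0$, a deformation of $x_0$ is a surface $x^0=R_0x_0+t_0$ with $dx^0=R_0dx_0$, $R_0\in\mathbf{SO}_3(\mathbb{C})$. In the setting of the claim, the leaf $x^1$ over a deformation $x^0$ is $x^1=R_0x_z+t_0$ evaluated along a solution of the equation $-(x_z-x_0)^T(\omega_0\times N_0)+2(\partial_{v_1}x_z)^TN_0\,dv_1=0$ with $\omega_0:=N_0\times R_0^{-1}dR_0N_0$, the variables restricted to $S$. *)

(* Defs.v *)
From Stdlib Require Import Reals List.
From Coquelicot Require Import Coquelicot.
Set Implicit Arguments.
Open Scope C_scope.

Definition V3 : Type := (C * C * C)%type.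
Definition v1 (x : V3) : C := fst (fst x).
Definition v2 (x : V3) : C := snd (fst x).
Definition v3 (x : V3) : C := snd x.
Definition mk3 (a b c : C) : V3 := (a, b, c).
Definition vadd (x y : V3) : V3 := mk3 (v1 x + v1 y) (v2 x + v2 y) (v3 x + v3 y).
Definition vsub (x y : V3) : V3 := mk3 (v1 x - v1 y) (v2 x - v2 y) (v3 x - v3 y).
Definition vscal (c : C) (x : V3) : V3 := mk3 (c * v1 x) (c * v2 x) (c * v3 x).
Definition vzero : V3 := mk3 (RtoC 0) (RtoC 0) (RtoC 0).
(** x^T y (no complex conjugation) *)
Definition dot (x y : V3) : C := v1 x * v1 y + v2 x * v2 y + v3 x * v3 y.
Definition cross (x y : V3) : V3 :=
  mk3 (v2 x * v3 y - v3 x * v2 y) (v3 x * v1 y - v1 x * v3 y) (v1 x * v2 y - v2 x * v1 y).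

Definition M3 : Type := (V3 * V3 * V3)%type.
Definition r1 (A : M3) : V3 := fst (fst A).
Definition r2 (A : M3) : V3 := snd (fst A).
Definition r3 (A : M3) : V3 := snd A.
Definition mkM (a b c : V3) : M3 := (a, b, c).
Definition mv (A : M3) (x : V3) : V3 := mk3 (dot (r1 A) x) (dot (r2 A) x) (dot (r3 A) x).
Definition trM (A : M3) : M3 :=
  mkM (mk3 (v1 (r1 A)) (v1 (r2 A)) (v1 (r3 A)))
      (mk3 (v2 (r1 A)) (v2 (r2 A)) (v2 (r3 A)))
      (mk3 (v3 (r1 A)) (v3 (r2 A)) (v3 (r3 A))).
Definition mm (A B : M3) : M3 :=
  let Bt := trM B in
  mkM (mv Bt (r1 A)) (mv Bt (r2 A)) (mv Bt (r3 A)).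
Definition idM : M3 :=
  mkM (mk3 (RtoC 1) (RtoC 0) (RtoC 0)) (mk3 (RtoC 0) (RtoC 1) (RtoC 0))
      (mk3 (RtoC 0) (RtoC 0) (RtoC 1)).
Definition detM (A : M3) : C := dot (r1 A) (cross (r2 A) (r3 A)).
Definition SO3 (A : M3) : Prop := mm (trM A) A = idM /\ detM A = RtoC 1.

Definition uncurry2 {T} (f : C -> C -> T) (p : C * C) : T := f (fst p) (snd p).
Definition open2 (D : C -> C -> Prop) : Prop := open (uncurry2 D).

Definition cdiff_at (f : C -> C -> C) (u v : C) : Prop :=
  exists a b : C,
    filterdiff (K := C_AbsRing) (U := prod_NormedModule C_AbsRing C_NormedModule C_NormedModule)
      (V := C_NormedModule)
      (uncurry2 f) (locally (u, v)) (fun h => a * fst h + b * snd h).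

Definition pu (f : C -> C -> C) : C -> C -> C := fun u v => C_derive (fun s => f s v) u.
Definition pv (f : C -> C -> C) : C -> C -> C := fun u v => C_derive (fun t => f u t) v.

Fixpoint iter_partial (l : list bool) (f : C -> C -> C) : C -> C -> C :=
  match l with
  | nil => f
  | true :: l' => pu (iter_partial l' f)
  | false :: l' => pv (iter_partial l' f)
  end.

(** holomorphic on D: all iterated partial derivatives are complex differentiable on D
    (equivalent to holomorphy on the open set D) *)
Definition holo (D : C -> C -> Prop) (f : C -> C -> C) : Prop :=
  forall (l : list bool) (u v : C), D u v -> cdiff_at (iter_partial l f) u v.

Definition holoV (D : C -> C -> Prop) (x : C -> C -> V3) : Prop :=
  holo D (fun u v => v1 (x u v)) /\ holo D (fun u v => v2 (x u v)) /\
  holo D (fun u v => v3 (x u v)).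
Definition holoM (D : C -> C -> Prop) (A : C -> C -> M3) : Prop :=
  holoV D (fun u v => r1 (A u v)) /\ holoV D (fun u v => r2 (A u v)) /\
  holoV D (fun u v => r3 (A u v)).

Definition puV (x : C -> C -> V3) : C -> C -> V3 := fun u v =>
  mk3 (pu (fun a b => v1 (x a b)) u v) (pu (fun a b => v2 (x a b)) u v)
      (pu (fun a b => v3 (x a b)) u v).
Definition pvV (x : C -> C -> V3) : C -> C -> V3 := fun u v =>
  mk3 (pv (fun a b => v1 (x a b)) u v) (pv (fun a b => v2 (x a b)) u v)
      (pv (fun a b => v3 (x a b)) u v).
Definition puM (A : C -> C -> M3) : C -> C -> M3 := fun u v =>
  mkM (puV (fun a b => r1 (A a b)) u v) (puV (fun a b => r2 (A a b)) u v)
      (puV (fun a b => r3 (A a b)) u v).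
Definition pvM (A : C -> C -> M3) : C -> C -> M3 := fun u v =>
  mkM (pvV (fun a b => r1 (A a b)) u v) (pvV (fun a b => r2 (A a b)) u v)
      (pvV (fun a b => r3 (A a b)) u v).

Definition surface (D : C -> C -> Prop) (x : C -> C -> V3) : Prop :=
  open2 D /\ holoV D x /\ forall u v, D u v -> cross (puV x u v) (pvV x u v) <> vzero.

Definition unit_normal (D : C -> C -> Prop) (x N : C -> C -> V3) : Prop :=
  holoV D N /\ forall u v, D u v ->
    dot (N u v) (N u v) = RtoC 1 /\ dot (N u v) (puV x u v) = RtoC 0 /\
    dot (N u v) (pvV x u v) = RtoC 0.

(** non-developable: the second fundamental form is nondegenerate
    (Gauss curvature nonzero) at every point *)
Definition nondevelopable (D : C -> C -> Prop) (x N : C -> C -> V3) : Prop :=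
  forall u v, D u v ->
    dot (puV (puV x) u v) (N u v) * dot (pvV (pvV x) u v) (N u v)
    - dot (pvV (puV x) u v) (N u v) * dot (pvV (puV x) u v) (N u v) <> RtoC 0.

Definition Sfun (x0 N0 xz : C -> C -> V3) (u0 v0 u1 v1 : C) : C :=
  dot (vsub (xz u1 v1) (x0 u0 v0)) (N0 u0 v0).

Definition inS (D0 D1 : C -> C -> Prop) (x0 N0 xz : C -> C -> V3) (u0 v0 u1 v1 : C) : Prop :=
  D0 u0 v0 /\ D1 u1 v1 /\ Sfun x0 N0 xz u0 v0 u1 v1 = RtoC 0.

Definition Ffun (N0 xz : C -> C -> V3) (u0 v0 u1 v1 : C) : C :=
  dot (puV xz u1 v1) (N0 u0 v0) * dot (pvV xz u1 v1) (N0 u0 v0).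

(** the hypothesis
   (I - N0 N0^T)[xz_u xz_v^T + xz_v xz_u^T] N0 = (xz_uv^T N0) (xz - x0) at a point *)
Definition key_identity (x0 N0 xz : C -> C -> V3) (u0 v0 u1 v1 : C) : Prop :=
  let N := N0 u0 v0 in
  let a := puV xz u1 v1 in
  let b := pvV xz u1 v1 in
  let w := vadd (vscal (dot b N) a) (vscal (dot a N) b) in
  vsub w (vscal (dot N w) N) =
  vscal (dot (pvV (puV xz) u1 v1) N) (vsub (xz u1 v1) (x0 u0 v0)).

Definition deformation (D0 : C -> C -> Prop) (x0 : C -> C -> V3)
  (R0 : C -> C -> M3) (t0 : C -> C -> V3) : Prop :=
  holoM D0 R0 /\ holoV D0 t0 /\
  forall u v, D0 u v ->
    SO3 (R0 u v) /\
    puV (fun a b => vadd (mv (R0 a b) (x0 a b)) (t0 a b)) u v = mv (R0 u v) (puV x0 u v) /\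
    pvV (fun a b => vadd (mv (R0 a b) (x0 a b)) (t0 a b)) u v = mv (R0 u v) (pvV x0 u v).

(** coefficients of the 1-form omega_0 = N0 x R0^{-1} dR0 N0 = om_u du0 + om_v dv0
    (for R0 in SO_3(C), R0^{-1} = R0^T) *)
Definition om_u (N0 : C -> C -> V3) (R0 : C -> C -> M3) (u v : C) : V3 :=
  cross (N0 u v) (mv (trM (R0 u v)) (mv (puM R0 u v) (N0 u v))).
Definition om_v (N0 : C -> C -> V3) (R0 : C -> C -> M3) (u v : C) : V3 :=
  cross (N0 u v) (mv (trM (R0 u v)) (mv (pvM R0 u v) (N0 u v))).

Definition pfaff_form (x0 N0 xz : C -> C -> V3) (R0 : C -> C -> M3)
  (u0 v0 u1 v1 du0 dv0 du1 dv1 : C) : C :=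
  let om := vadd (vscal du0 (om_u N0 R0 u0 v0)) (vscal dv0 (om_v N0 R0 u0 v0)) in
  - dot (vsub (xz u1 v1) (x0 u0 v0)) (cross om (N0 u0 v0))
  + RtoC 2 * dot (pvV xz u1 v1) (N0 u0 v0) * dv1.

Definition leaf (D0 D1 : C -> C -> Prop) (x0 N0 xz : C -> C -> V3) (R0 : C -> C -> M3)
  (D : C -> C -> Prop) (U0 V0 U1 V1 : C -> C -> C) : Prop :=
  open2 D /\ holo D U0 /\ holo D V0 /\ holo D U1 /\ holo D V1 /\
  forall s t, D s t ->
    inS D0 D1 x0 N0 xz (U0 s t) (V0 s t) (U1 s t) (V1 s t) /\
    forall al be : C,
      pfaff_form x0 N0 xz R0 (U0 s t) (V0 s t) (U1 s t) (V1 s t)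
        (al * pu U0 s t + be * pv U0 s t) (al * pu V0 s t + be * pv V0 s t)
        (al * pu U1 s t + be * pv U1 s t) (al * pu V1 s t + be * pv V1 s t) = RtoC 0.

Definition x1_leaf (xz : C -> C -> V3) (R0 : C -> C -> M3) (t0 : C -> C -> V3)
  (U0 V0 U1 V1 : C -> C -> C) : C -> C -> V3 := fun s t =>
  vadd (mv (R0 (U0 s t) (V0 s t)) (xz (U1 s t) (V1 s t))) (t0 (U0 s t) (V0 s t)).

(* Main.v *)
Require Import Defs.
From Stdlib Require Import Reals Lra List.
From Coquelicot Require Import Coquelicot.
Open Scope C_scope.

Lemma abs_fst_le (w : C) : Rabs (fst w) <= Cmod w.
Proof. destruct w as [a b]; simpl. apply Rabs_le; split.
 - pose proof (Rmax_Cmod (a,b)). simpl in H. pose proof (Rle_abs (-a)). rewrite Rabs_Ropp in H0.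
   pose proof (Rle_trans _ _ _ (Rmax_l _ _) H). lra.
 - pose proof (Rmax_Cmod (a,b)). simpl in H. pose proof (Rle_abs a).
   pose proof (Rle_trans _ _ _ (Rmax_l _ _) H). lra. Qed.

Lemma abs_snd_le (w : C) : Rabs (snd w) <= Cmod w.
Proof. destruct w as [a b]; simpl. apply Rabs_le; split.
 - pose proof (Rmax_Cmod (a,b)). simpl in H. pose proof (Rle_abs (-b)). rewrite Rabs_Ropp in H0.
   pose proof (Rle_trans _ _ _ (Rmax_r _ _) H). lra.
 - pose proof (Rmax_Cmod (a,b)). simpl in H. pose proof (Rle_abs b).
   pose proof (Rle_trans _ _ _ (Rmax_r _ _) H). lra. Qed.

Lemma restr (P : C -> R) (h : C -> C) (z l : C) :
  (forall w1 w2, P (Cminus w1 w2) = (P w1 - P w2)%R) ->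
  (forall w, Rabs (P w) <= Cmod w) ->
  (forall (x : R) w, P (Cmult (RtoC x) w) = (x * P w)%R) ->
  is_derive h z l -> is_derive (fun x : R => P (h (x, snd z))) (fst z) (P l).
Proof.
  intros HP1 HP2 HP3 Hd. apply is_derive_Reals.
  destruct Hd as [_ Hd].
  specialize (Hd z (fun P0 H => H)).
  intros eps Heps.
  assert (He2 : 0 < eps / 2) by lra.
  specialize (Hd (mkposreal _ He2)).
  apply (locally_le_locally_norm z) in Hd. destruct Hd as [del Hdel].
  exists del. intros hh Hh0 Hhd.
  set (y := ((fst z + hh)%R, snd z) : C).
  assert (Hyz : Cminus y z = (hh, 0%R)).
  { destruct z as [a b]; unfold y, Cminus, Cplus, Copp; simpl; f_equal; ring. }
  assert (Hy : ball z del y).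
  { apply C_NormedModule_mixin_compat1. change (Cmod (Cminus y z) < del). rewrite Hyz.
    change (hh, 0%R) with (RtoC hh). rewrite Cmod_R. exact Hhd. }
  specialize (Hdel y Hy). simpl in Hdel.
  change (Cmod (Cminus (Cminus (h y) (h z)) (Cmult (Cminus y z) l)) <= eps/2 * Cmod (Cminus y z)) in Hdel.
  rewrite Hyz in Hdel. change (hh, 0%R) with (RtoC hh) in Hdel. rewrite Cmod_R in Hdel.
  pose proof (HP2 (Cminus (Cminus (h y) (h z)) (Cmult hh l))) as H2.
  rewrite HP1, HP1, HP3 in H2.
  assert (Hz : z = (fst z, snd z)) by (destruct z; reflexivity).
  replace (fst z + hh)%R with (fst z + hh)%R by ring.
  unfold y in H2.
  assert (Habs : 0 < Rabs hh) by (apply Rabs_pos_lt; auto).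
  replace ((P (h ((fst z + hh)%R, snd z)) - P (h z)) / hh - P l)%R
    with ((P (h ((fst z + hh)%R, snd z)) - P (h z) - hh * P l) / hh)%R by (field; auto).
  rewrite <- Hz. unfold y in *.
  set (A := P (h ((fst z + hh)%R, snd z))) in *. set (B := P (h z)) in *.
  replace ((A - B) / hh - P l)%R with ((A - B - hh * P l) / hh)%R by (field; auto).
  unfold Rdiv. rewrite Rabs_mult, Rabs_inv.
  apply (Rmult_lt_reg_r (Rabs hh)); auto.
  rewrite Rmult_assoc, Rinv_l by lra. rewrite Rmult_1_r.
  eapply Rle_lt_trans. apply (Rle_trans _ _ _ H2 Hdel). nra.
Qed.

Lemma restr_fst (h : C -> C) (z l : C) :
  is_derive h z l -> is_derive (fun x : R => fst (h (x, snd z))) (fst z) (fst l).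
Proof. apply restr. - intros [a b] [c d]; simpl; ring. - apply abs_fst_le.
  - intros x [a b]; simpl; ring. Qed.

Lemma restr_snd (h : C -> C) (z l : C) :
  is_derive h z l -> is_derive (fun x : R => snd (h (x, snd z))) (fst z) (snd l).
Proof. apply restr. - intros [a b] [c d]; simpl; ring. - apply abs_snd_le.
  - intros x [a b]; simpl; ring. Qed.

Lemma convD (f : C -> C) u l : @is_derive C_AbsRing (AbsRing_NormedModule C_AbsRing) f u l -> @is_derive C_AbsRing C_NormedModule f u l.
Proof. intros [[L1 L2 L3] H]. split. - split; [exact L1 | exact L2 | exact L3]. - exact H. Qed.
Lemma is_derive_idC (u : C) : is_derive (fun t : C => t) u (RtoC 1).
Proof. apply convD. exact (is_derive_id u). Qed.
Lemma is_derive_constC (a u : C) : is_derive (fun _ : C => a) u (RtoC 0).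
Proof. exact (is_derive_const (V := C_NormedModule) a u). Qed.
Lemma convD' (f : C -> C) u l : @is_derive C_AbsRing C_NormedModule f u l -> @is_derive C_AbsRing (AbsRing_NormedModule C_AbsRing) f u l.
Proof. intros [[L1 L2 L3] H]. split. - split; [exact L1 | exact L2 | exact L3]. - exact H. Qed.
Lemma is_derive_multC (f g : C -> C) x df dg : is_derive f x df -> is_derive g x dg ->
  is_derive (fun y => f y * g y) x (df * g x + f x * dg).
Proof. intros H1 H2. apply convD. apply (is_derive_mult f g x df dg (convD' _ _ _ H1) (convD' _ _ _ H2)).
  intros; apply Cmult_comm. Qed.
Lemma is_derive_plusC (f g : C -> C) x df dg : is_derive f x df -> is_derive g x dg ->
  is_derive (fun y => f y + g y) x (df + dg).
Proof. intros H1 H2. exact (is_derive_plus f g x df dg H1 H2). Qed.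
Lemma is_derive_minusC (f g : C -> C) x df dg : is_derive f x df -> is_derive g x dg ->
  is_derive (fun y => f y - g y) x (df - dg).
Proof. intros H1 H2. exact (is_derive_minus f g x df dg H1 H2). Qed.
Lemma is_derive_oppC (f : C -> C) x df : is_derive f x df ->
  is_derive (fun y => - f y) x (- df).
Proof. intros H1. exact (is_derive_opp f x df H1). Qed.
Lemma is_derive_extC (f g : C -> C) x l : (forall y, f y = g y) -> is_derive f x l -> is_derive g x l.
Proof. intros He H. apply (is_derive_ext f g x l He H). Qed.

Lemma loc_prod {U V : UniformSpace} (x : U) (y : V) (P : U * V -> Prop) :
  locally (x, y) P -> filter_prod (locally x) (locally y) P.
Proof. intros [eps H]. exists (ball x eps) (ball y eps).
  apply locally_ball. apply locally_ball. intros u v Hu Hv. apply H. split; assumption. Qed.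

Definition Dpt (f : C -> C -> C) (u v a b : C) : Prop :=
  filterdiff (K := C_AbsRing) (U := prod_NormedModule C_AbsRing C_NormedModule C_NormedModule)
      (V := C_NormedModule)
      (uncurry2 f) (locally (u, v)) (fun h => a * fst h + b * snd h).

Lemma chain (f : C -> C -> C) (g1 g2 : C -> C) (x a b d1 d2 : C) :
  Dpt f (g1 x) (g2 x) a b -> is_derive g1 x d1 -> is_derive g2 x d2 ->
  is_derive (fun y => f (g1 y) (g2 y)) x (a * d1 + b * d2).
Proof.
  intros Hf H1 H2. unfold is_derive.
  eapply filterdiff_ext_lin.
  - apply (filterdiff_comp_2 (K := C_AbsRing) (T := AbsRing_NormedModule C_AbsRing) (U := C_NormedModule) (V := C_NormedModule) (W := C_NormedModule)
      g1 g2 f _ _ (fun p q => a * p + b * q) H1 H2).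
    assert (HPF : ProperFilter (filtermap (fun t : AbsRing_NormedModule C_AbsRing => (g1 t, g2 t)) (locally (x : AbsRing_NormedModule C_AbsRing)))).
    idtac.
    { apply filtermap_proper_filter. apply locally_filter. }
    apply (filterdiff_locally _ (g1 x, g2 x)).
    + intros P HP. apply loc_prod in HP.
      pose proof (ex_derive_continuous g1 x (ex_intro _ d1 H1)) as c1.
      pose proof (ex_derive_continuous g2 x (ex_intro _ d2 H2)) as c2.
      exact (filterlim_pair g1 g2 c1 c2 P HP).
    + exact Hf.
  - intros y. simpl. change (a * (y * d1) + b * (y * d2) = y * (a * d1 + b * d2)). ring.
Qed.

Lemma Dpt_pu (f : C -> C -> C) u v a b : Dpt f u v a b -> is_derive (fun s => f s v) u a.
Proof. intros H.
  assert (H1 := chain f (fun t => t) (fun _ => v) u a b 1 0 H (is_derive_idC u) (is_derive_constC v u)).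
  replace a with (a * 1 + b * 0) by ring. exact H1. Qed.

Lemma Dpt_pv (f : C -> C -> C) u v a b : Dpt f u v a b -> is_derive (fun t => f u t) v b.
Proof. intros H.
  assert (H1 := chain f (fun _ => u) (fun t => t) v a b 0 1 H (is_derive_constC u v) (is_derive_idC v)).
  replace b with (a * 0 + b * 1) by ring. exact H1. Qed.

Lemma cdiff_Dpt f u v : cdiff_at f u v -> Dpt f u v (pu f u v) (pv f u v).
Proof. intros [a [b H]].
  assert (Ha : pu f u v = a) by (apply is_C_derive_unique; apply (Dpt_pu f u v a b H)).
  assert (Hb : pv f u v = b) by (apply is_C_derive_unique; apply (Dpt_pv f u v a b H)).
  rewrite Ha, Hb. exact H. Qed.

Lemma cdiff_pu f u v : cdiff_at f u v -> is_derive (fun s => f s v) u (pu f u v).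
Proof. intros H. apply (Dpt_pu _ _ _ _ (pv f u v)). apply cdiff_Dpt; auto. Qed.

Lemma cdiff_pv f u v : cdiff_at f u v -> is_derive (fun t => f u t) v (pv f u v).
Proof. intros H. apply (Dpt_pv _ _ _ (pu f u v)). apply cdiff_Dpt; auto. Qed.

Lemma chain_cd (f : C -> C -> C) (g1 g2 : C -> C) (x d1 d2 : C) :
  cdiff_at f (g1 x) (g2 x) -> is_derive g1 x d1 -> is_derive g2 x d2 ->
  is_derive (fun y => f (g1 y) (g2 y)) x
    (pu f (g1 x) (g2 x) * d1 + pv f (g1 x) (g2 x) * d2).
Proof. intros H; apply chain. apply cdiff_Dpt; auto. Qed.

Lemma loc_in (c x d : R) : Rabs (x - c) < d -> locally x (fun z : R => Rabs (z - c) < d).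
Proof. intros H. assert (He : 0 < d - Rabs (x - c)) by lra.
  exists (mkposreal _ He). intros z Hz. change (Rabs (z - x) < d - Rabs (x - c)) in Hz.
  replace (z - c)%R with ((z - x) + (x - c))%R by ring.
  eapply Rle_lt_trans. apply Rabs_triang. simpl in Hz. lra. Qed.

Lemma schwarzP (P : C -> R)
  (PL1 : forall w1 w2, P (Cminus w1 w2) = (P w1 - P w2)%R)
  (PL2 : forall w, Rabs (P w) <= Cmod w)
  (PL3 : forall (x : R) w, P (Cmult (RtoC x) w) = (x * P w)%R)
  (PL4 : forall (w w' : C) (e : R), @ball C_UniformSpace w e w' -> Rabs (P w' - P w) < e)
  (D : C -> C -> Prop) (f : C -> C -> C) (u v : C) :
  open2 D -> holo D f -> D u v -> P (pv (pu f) u v) = P (pu (pv f) u v).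
Proof.
  intros Hop Hh Huv. destruct u as [ur ui]. destruct v as [vr vi].
  destruct (Hop ((ur, ui), (vr, vi)) Huv) as [eps Heps].
  assert (InD : forall x y, Rabs (x - ur) < eps -> Rabs (y - vr) < eps -> D (x, ui) (y, vi)).
  { intros x y Hx Hy. apply (Heps ((x, ui), (y, vi))). split; split; simpl; auto;
    change (Rabs (ui - ui) < eps) || change (Rabs (vi - vi) < eps);
    rewrite Rminus_diag, Rabs_R0; apply cond_pos. }
  set (F := fun x y : R => P (f (x, ui) (y, vi))).
  assert (A1 : forall x y, Rabs (x - ur) < eps -> Rabs (y - vr) < eps ->
     is_derive (fun z => F z y) x (P (pu f (x, ui) (y, vi)))).
  { intros x y Hx Hy. apply (restr P (fun s => f s (y, vi)) (x, ui)); auto.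
    apply cdiff_pu. apply (Hh nil). auto. }
  assert (A2 : forall x y, Rabs (x - ur) < eps -> Rabs (y - vr) < eps ->
     is_derive (fun z => F x z) y (P (pv f (x, ui) (y, vi)))).
  { intros x y Hx Hy. apply (restr P (fun s => f (x, ui) s) (y, vi)); auto.
    apply cdiff_pv. apply (Hh nil). auto. }
  assert (B1 : forall x y, Rabs (x - ur) < eps -> Rabs (y - vr) < eps ->
     is_derive (fun z => Derive (fun t => F z t) y) x (P (pu (pv f) (x, ui) (y, vi)))).
  { intros x y Hx Hy.
    apply (is_derive_ext_loc (fun z => P (pv f (z, ui) (y, vi)))).
    - generalize (loc_in ur x eps Hx). apply filter_imp. intros z Hz.
      symmetry. apply is_derive_unique. apply A2; auto.
    - apply (restr P (fun s => pv f s (y, vi)) (x, ui)); auto.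
      apply cdiff_pu. apply (Hh (cons false nil)). auto. }
  assert (B2 : forall x y, Rabs (x - ur) < eps -> Rabs (y - vr) < eps ->
     is_derive (fun z => Derive (fun t => F t z) x) y (P (pv (pu f) (x, ui) (y, vi)))).
  { intros x y Hx Hy.
    apply (is_derive_ext_loc (fun z => P (pu f (x, ui) (z, vi)))).
    - generalize (loc_in vr y eps Hy). apply filter_imp. intros z Hz.
      symmetry. apply is_derive_unique. apply A1; auto.
    - apply (restr P (fun s => pu f (x, ui) s) (y, vi)); auto.
      apply cdiff_pv. apply (Hh (cons true nil)). auto. }
  assert (Cont : forall (h : C -> C -> C), cdiff_at h (ur, ui) (vr, vi) ->
     continuity_2d_pt (fun x y => P (h (x, ui) (y, vi))) ur vr).
  { intros h Hd e.
    destruct Hd as [a [b Hd]].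
    assert (Hc := filterdiff_continuous (uncurry2 h) ((ur, ui), (vr, vi)) (ex_intro _ _ Hd)).
    assert (Hb := Hc _ (locally_ball (h (ur, ui) (vr, vi)) e)).
    destruct Hb as [del Hdel].
    exists del. intros x y Hx Hy.
    apply PL4. apply (Hdel ((x, ui), (y, vi))).
    split; split; simpl; auto;
    change (Rabs (ui - ui) < del) || change (Rabs (vi - vi) < del);
    rewrite Rminus_diag, Rabs_R0; apply cond_pos. }
  assert (HS := Schwarz F ur vr).
  assert (H0 : Rabs (ur - ur) < eps) by (rewrite Rminus_diag, Rabs_R0; apply cond_pos).
  assert (H0' : Rabs (vr - vr) < eps) by (rewrite Rminus_diag, Rabs_R0; apply cond_pos).
  rewrite <- (is_derive_unique _ _ _ (B1 ur vr H0 H0')).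
  rewrite <- (is_derive_unique _ _ _ (B2 ur vr H0 H0')).
  symmetry. apply HS.
  - exists eps. intros x y Hx Hy. repeat split.
    + eexists; apply A1; auto.
    + eexists; apply A2; auto.
    + eexists; apply B1; auto.
    + eexists; apply B2; auto.
  - apply continuity_2d_pt_ext_loc with (f := fun x y => P (pu (pv f) (x, ui) (y, vi))).
    + exists eps. intros x y Hx Hy. symmetry. apply is_derive_unique. apply B1; auto.
    + apply Cont. apply (Hh (cons true (cons false nil))). auto.
  - apply continuity_2d_pt_ext_loc with (f := fun x y => P (pv (pu f) (x, ui) (y, vi))).
    + exists eps. intros x y Hx Hy. symmetry. apply is_derive_unique. apply B2; auto.
    + apply Cont. apply (Hh (cons false (cons true nil))). auto.
Qed.

Lemma schwarz_holo (D : C -> C -> Prop) (f : C -> C -> C) (u v : C) :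
  open2 D -> holo D f -> D u v -> pv (pu f) u v = pu (pv f) u v.
Proof.
  intros Hop Hh Huv.
  assert (E1 := schwarzP (fun w => fst w)
    ltac:(intros [a b] [c d]; simpl; ring) abs_fst_le ltac:(intros x [a b]; simpl; ring)
    ltac:(intros [a b] [c d] e [H1 H2]; exact H1) D f u v Hop Hh Huv).
  assert (E2 := schwarzP (fun w => snd w)
    ltac:(intros [a b] [c d]; simpl; ring) abs_snd_le ltac:(intros x [a b]; simpl; ring)
    ltac:(intros [a b] [c d] e [H1 H2]; exact H2) D f u v Hop Hh Huv).
  cbv beta in E1, E2. apply injective_projections; assumption.
Qed.

Ltac dv := repeat match goal with
  | v : V3 |- _ => destruct v as [[? ?] ?]
  | A : M3 |- _ => destruct A as [[? ?] ?] end.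
Ltac vunf := unfold vadd, vsub, vscal, vzero, dot, cross, mv, trM, mm, idM, detM, mkM, mk3, r1, r2, r3, v1, v2, v3 in *; cbn [fst snd] in *.

Definition dV (p : C -> V3) (s : C) (p' : V3) : Prop :=
  is_derive (fun x => v1 (p x)) s (v1 p') /\ is_derive (fun x => v2 (p x)) s (v2 p') /\
  is_derive (fun x => v3 (p x)) s (v3 p').

Lemma isd (f g : C -> C) (x l l' : C) : is_derive f x l -> (forall y, f y = g y) -> l = l' -> is_derive g x l'.
Proof. intros H He El. subst l'. apply (is_derive_extC f g x l He H). Qed.

Lemma dV_dot p q s p' q' : dV p s p' -> dV q s q' ->
  is_derive (fun x => dot (p x) (q x)) s (dot p' (q s) + dot (p s) q').
Proof. intros [H1 [H2 H3]] [G1 [G2 G3]].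
  eapply isd.
  - exact (is_derive_plusC _ _ _ _ _ (is_derive_plusC _ _ _ _ _
      (is_derive_multC _ _ _ _ _ H1 G1) (is_derive_multC _ _ _ _ _ H2 G2))
      (is_derive_multC _ _ _ _ _ H3 G3)).
  - intros; reflexivity.
  - unfold dot; ring.
Qed.

Lemma cdiff_of_holo D f u v : holo D f -> D u v -> cdiff_at f u v.
Proof. intros H Hd. exact (H nil u v Hd). Qed.

Lemma dV_holo_u D x u v : holoV D x -> D u v -> dV (fun s => x s v) u (puV x u v).
Proof. intros [H1 [H2 H3]] Hd. split; [|split]; apply (cdiff_pu (fun a b => _ (x a b)));
  apply cdiff_of_holo with D; auto. Qed.

Lemma dV_holo_v D x u v : holoV D x -> D u v -> dV (fun t => x u t) v (pvV x u v).
Proof. intros [H1 [H2 H3]] Hd. split; [|split]; apply (cdiff_pv (fun a b => _ (x a b)));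
  apply cdiff_of_holo with D; auto. Qed.

Lemma dV_chain D x (g1 g2 : C -> C) (s d1 d2 : C) : holoV D x -> D (g1 s) (g2 s) ->
  is_derive g1 s d1 -> is_derive g2 s d2 ->
  dV (fun y => x (g1 y) (g2 y)) s
     (vadd (vscal d1 (puV x (g1 s) (g2 s))) (vscal d2 (pvV x (g1 s) (g2 s)))).
Proof. intros [H1 [H2 H3]] Hd G1 G2.
  split; [|split].
  - eapply isd; [apply (chain_cd (fun a b => v1 (x a b)) g1 g2 s d1 d2);
    [apply cdiff_of_holo with D; auto | exact G1 | exact G2] | intros; reflexivity |
    unfold puV, pvV; vunf; ring].
  - eapply isd; [apply (chain_cd (fun a b => v2 (x a b)) g1 g2 s d1 d2);
    [apply cdiff_of_holo with D; auto | exact G1 | exact G2] | intros; reflexivity |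
    unfold puV, pvV; vunf; ring].
  - eapply isd; [apply (chain_cd (fun a b => v3 (x a b)) g1 g2 s d1 d2);
    [apply cdiff_of_holo with D; auto | exact G1 | exact G2] | intros; reflexivity |
    unfold puV, pvV; vunf; ring].
Qed.

Lemma dV_const (c : V3) s : dV (fun _ => c) s vzero.
Proof. split; [|split]; apply is_derive_constC. Qed.

Lemma dV_add p q s p' q' : dV p s p' -> dV q s q' -> dV (fun y => vadd (p y) (q y)) s (vadd p' q').
Proof. intros [H1 [H2 H3]] [G1 [G2 G3]]. split; [|split].
  - eapply isd; [apply (is_derive_plusC _ _ _ _ _ H1 G1) | intros; reflexivity | reflexivity].
  - eapply isd; [apply (is_derive_plusC _ _ _ _ _ H2 G2) | intros; reflexivity | reflexivity].
  - eapply isd; [apply (is_derive_plusC _ _ _ _ _ H3 G3) | intros; reflexivity | reflexivity].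
Qed.

Lemma dV_sub p q s p' q' : dV p s p' -> dV q s q' -> dV (fun y => vsub (p y) (q y)) s (vsub p' q').
Proof. intros [H1 [H2 H3]] [G1 [G2 G3]]. split; [|split].
  - eapply isd; [apply (is_derive_minusC _ _ _ _ _ H1 G1) | intros; reflexivity | reflexivity].
  - eapply isd; [apply (is_derive_minusC _ _ _ _ _ H2 G2) | intros; reflexivity | reflexivity].
  - eapply isd; [apply (is_derive_minusC _ _ _ _ _ H3 G3) | intros; reflexivity | reflexivity].
Qed.

Definition dM (A : C -> M3) (s : C) (A' : M3) : Prop :=
  dV (fun y => r1 (A y)) s (r1 A') /\ dV (fun y => r2 (A y)) s (r2 A') /\
  dV (fun y => r3 (A y)) s (r3 A').

Lemma dV_mv A p s A' p' : dM A s A' -> dV p s p' ->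
  dV (fun y => mv (A y) (p y)) s (vadd (mv A' (p s)) (mv (A s) p')).
Proof. intros [H1 [H2 H3]] G. split; [|split].
  - eapply isd; [apply (dV_dot _ _ _ _ _ H1 G) | intros; reflexivity | reflexivity].
  - eapply isd; [apply (dV_dot _ _ _ _ _ H2 G) | intros; reflexivity | reflexivity].
  - eapply isd; [apply (dV_dot _ _ _ _ _ H3 G) | intros; reflexivity | reflexivity].
Qed.

Definition mlin (d1 : C) (A1 : M3) (d2 : C) (A2 : M3) : M3 :=
  mkM (vadd (vscal d1 (r1 A1)) (vscal d2 (r1 A2)))
      (vadd (vscal d1 (r2 A1)) (vscal d2 (r2 A2)))
      (vadd (vscal d1 (r3 A1)) (vscal d2 (r3 A2))).

Lemma dM_chain D A (g1 g2 : C -> C) (s d1 d2 : C) : holoM D A -> D (g1 s) (g2 s) ->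
  is_derive g1 s d1 -> is_derive g2 s d2 ->
  dM (fun y => A (g1 y) (g2 y)) s (mlin d1 (puM A (g1 s) (g2 s)) d2 (pvM A (g1 s) (g2 s))).
Proof. intros [H1 [H2 H3]] Hd G1 G2. split; [|split];
  [apply (dV_chain D (fun a b => r1 (A a b))) | apply (dV_chain D (fun a b => r2 (A a b))) |
   apply (dV_chain D (fun a b => r3 (A a b)))]; auto. Qed.

Lemma dM_holo_u D A u v : holoM D A -> D u v -> dM (fun s => A s v) u (puM A u v).
Proof. intros [H1 [H2 H3]] Hd. split; [|split];
  [apply (dV_holo_u D (fun a b => r1 (A a b))) | apply (dV_holo_u D (fun a b => r2 (A a b))) |
   apply (dV_holo_u D (fun a b => r3 (A a b)))]; auto. Qed.

Lemma dM_holo_v D A u v : holoM D A -> D u v -> dM (fun t => A u t) v (pvM A u v).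
Proof. intros [H1 [H2 H3]] Hd. split; [|split];
  [apply (dV_holo_v D (fun a b => r1 (A a b))) | apply (dV_holo_v D (fun a b => r2 (A a b))) |
   apply (dV_holo_v D (fun a b => r3 (A a b)))]; auto. Qed.

Lemma V3_eta (L : V3) : mk3 (v1 L) (v2 L) (v3 L) = L.
Proof. destruct L as [[a b] c]; reflexivity. Qed.

Lemma puV_of (x : C -> C -> V3) s t L : dV (fun y => x y t) s L -> puV x s t = L.
Proof. intros [H1 [H2 H3]]. unfold puV, pu; cbv beta.
  transitivity (mk3 (v1 L) (v2 L) (v3 L)); [|apply V3_eta].
  f_equal; apply is_C_derive_unique; assumption. Qed.

Lemma pvV_of (x : C -> C -> V3) s t L : dV (fun y => x s y) t L -> pvV x s t = L.
Proof. intros [H1 [H2 H3]]. unfold pvV, pv; cbv beta.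
  transitivity (mk3 (v1 L) (v2 L) (v3 L)); [|apply V3_eta].
  f_equal; apply is_C_derive_unique; assumption. Qed.

Lemma loc_conv (x : C) (P : C -> Prop) : @locally C_UniformSpace x P -> @locally (AbsRing_UniformSpace C_AbsRing) x P.
Proof. intros [e He]. exists e. intros y Hy. apply He. apply C_NormedModule_mixin_compat1. exact Hy. Qed.

Lemma is_derive_locconst (g : C -> C) (x c : C) : @locally C_UniformSpace x (fun y => g y = c) -> is_derive g x (RtoC 0).
Proof. intros H. apply (is_derive_ext_loc (fun _ => c)).
  - apply loc_conv. generalize H. apply filter_imp. intros y Hy; auto.
  - apply is_derive_constC. Qed.

Lemma open2_u D u v : open2 D -> D u v -> locally u (fun s => D s v).
Proof. intros Hop Hd. destruct (Hop (u, v) Hd) as [e He]. exists e. intros s Hs.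
  apply (He (s, v)). split; auto. apply ball_center. Qed.

Lemma open2_v D u v : open2 D -> D u v -> locally v (fun t => D u t).
Proof. intros Hop Hd. destruct (Hop (u, v) Hd) as [e He]. exists e. intros s Hs.
  apply (He (u, s)). split; auto. apply ball_center. Qed.

Lemma alg1 (N a b c z X Xu Nu : V3) : dot N Nu = RtoC 0 -> dot N Xu = RtoC 0 ->
  vsub (vadd (vscal (dot b N) a) (vscal (dot a N) b))
       (vscal (dot N (vadd (vscal (dot b N) a) (vscal (dot a N) b))) N) = vscal (dot c N) (vsub z X) ->
  (dot vzero N + dot a Nu) * dot b N + dot a N * (dot vzero N + dot b Nu) =
  dot c N * (dot (vsub vzero Xu) N + dot (vsub z X) Nu).
Proof.
  intros H1 H2 K. apply (f_equal (fun q => dot q Nu)) in K. cbv beta in K.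
  set (w := vadd (vscal (dot b N) a) (vscal (dot a N) b)) in K.
  transitivity (dot (vsub w (vscal (dot N w) N)) Nu + dot N w * dot N Nu).
  - unfold w. clear K. dv; vunf; ring.
  - rewrite K, H1. replace (dot (vsub vzero Xu) N) with (- dot N Xu) by (clear; dv; vunf; ring).
    rewrite H2. clear. dv; vunf; ring.
Qed.

Lemma half0 (x : C) : x + x = RtoC 0 -> x = RtoC 0.
Proof. intros H. assert (H2 : RtoC 2 <> RtoC 0) by (intro E; apply RtoC_inj in E; lra).
  replace x with ((x + x) / RtoC 2).
  - rewrite H. unfold Cdiv. ring.
  - field. Qed.

Lemma NNu_zero D x N u v : open2 D -> unit_normal D x N -> D u v ->
  dot (N u v) (puV N u v) = RtoC 0 /\ dot (N u v) (pvV N u v) = RtoC 0.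
Proof. intros Hop [HN Hun] Hd. split.
  - apply half0.
    assert (E := dV_dot _ _ _ _ _ (dV_holo_u D N u v HN Hd) (dV_holo_u D N u v HN Hd)).
    assert (E2 : is_derive (fun s => dot (N s v) (N s v)) u (RtoC 0)).
    { apply (is_derive_locconst _ _ (RtoC 1)). generalize (open2_u D u v Hop Hd).
      apply filter_imp. intros s Hs. apply (Hun s v Hs). }
    assert (E3 := eq_trans (eq_sym (is_C_derive_unique _ _ _ E)) (is_C_derive_unique _ _ _ E2)).
    rewrite <- E3. clear. dv; vunf; ring.
  - apply half0.
    assert (E := dV_dot _ _ _ _ _ (dV_holo_v D N u v HN Hd) (dV_holo_v D N u v HN Hd)).
    assert (E2 : is_derive (fun t => dot (N u t) (N u t)) v (RtoC 0)).
    { apply (is_derive_locconst _ _ (RtoC 1)). generalize (open2_v D u v Hop Hd).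
      apply filter_imp. intros s Hs. apply (Hun u s Hs). }
    assert (E3 := eq_trans (eq_sym (is_C_derive_unique _ _ _ E)) (is_C_derive_unique _ _ _ E2)).
    rewrite <- E3. clear. dv; vunf; ring.
Qed.

Lemma part_u D0 x0 N0 xz u0 v0 u1 v1 : open2 D0 -> holoV D0 x0 -> unit_normal D0 x0 N0 ->
  D0 u0 v0 -> key_identity x0 N0 xz u0 v0 u1 v1 ->
  C_derive (fun s => Ffun N0 xz s v0 u1 v1) u0 =
  dot (pvV (puV xz) u1 v1) (N0 u0 v0) * C_derive (fun s => Sfun x0 N0 xz s v0 u1 v1) u0.
Proof.
  intros Hop Hx Hun Hd K.
  destruct (NNu_zero D0 x0 N0 u0 v0 Hop Hun Hd) as [Z1 _].
  pose proof Hun as [HN Hun'].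
  destruct (Hun' u0 v0 Hd) as [_ [XN _]].
  assert (dN := dV_holo_u D0 N0 u0 v0 HN Hd).
  assert (dX := dV_holo_u D0 x0 u0 v0 Hx Hd).
  assert (dS := dV_dot _ _ _ _ _ (dV_sub _ _ _ _ _ (dV_const (xz u1 v1) u0) dX) dN).
  assert (dF := is_derive_multC _ _ _ _ _
     (dV_dot _ _ _ _ _ (dV_const (puV xz u1 v1) u0) dN)
     (dV_dot _ _ _ _ _ (dV_const (pvV xz u1 v1) u0) dN)).
  rewrite (is_C_derive_unique (fun s => Ffun N0 xz s v0 u1 v1) u0 _ dF),
    (is_C_derive_unique (fun s => Sfun x0 N0 xz s v0 u1 v1) u0 _ dS).
  unfold key_identity in K. cbv zeta in K.
  apply alg1; auto.
Qed.

Lemma part_v D0 x0 N0 xz u0 v0 u1 v1 : open2 D0 -> holoV D0 x0 -> unit_normal D0 x0 N0 ->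
  D0 u0 v0 -> key_identity x0 N0 xz u0 v0 u1 v1 ->
  C_derive (fun t => Ffun N0 xz u0 t u1 v1) v0 =
  dot (pvV (puV xz) u1 v1) (N0 u0 v0) * C_derive (fun t => Sfun x0 N0 xz u0 t u1 v1) v0.
Proof.
  intros Hop Hx Hun Hd K.
  destruct (NNu_zero D0 x0 N0 u0 v0 Hop Hun Hd) as [_ Z1].
  pose proof Hun as [HN Hun'].
  destruct (Hun' u0 v0 Hd) as [_ [_ XN]].
  assert (dN := dV_holo_v D0 N0 u0 v0 HN Hd).
  assert (dX := dV_holo_v D0 x0 u0 v0 Hx Hd).
  assert (dS := dV_dot _ _ _ _ _ (dV_sub _ _ _ _ _ (dV_const (xz u1 v1) v0) dX) dN).
  assert (dF := is_derive_multC _ _ _ _ _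
     (dV_dot _ _ _ _ _ (dV_const (puV xz u1 v1) v0) dN)
     (dV_dot _ _ _ _ _ (dV_const (pvV xz u1 v1) v0) dN)).
  rewrite (is_C_derive_unique (fun t => Ffun N0 xz u0 t u1 v1) v0 _ dF),
    (is_C_derive_unique (fun t => Sfun x0 N0 xz u0 t u1 v1) v0 _ dS).
  unfold key_identity in K. cbv zeta in K.
  apply alg1; auto.
Qed.

Lemma V3eq (a b c d e f : C) : a = d -> b = e -> c = f -> (((a, b), c) : V3) = ((d, e), f).
Proof. intros; subst; reflexivity. Qed.
Lemma M3eq (a b c d e f g h i a' b' c' d' e' f' g' h' i' : C) :
  a = a' -> b = b' -> c = c' -> d = d' -> e = e' -> f = f' -> g = g' -> h = h' -> i = i' ->
  (((((a, b), c), ((d, e), f)), ((g, h), i)) : M3) = ((((a', b'), c'), ((d', e'), f')), ((g', h'), i')).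
Proof. intros; subst; reflexivity. Qed.

Definition madd (A B : M3) : M3 := mkM (vadd (r1 A) (r1 B)) (vadd (r2 A) (r2 B)) (vadd (r3 A) (r3 B)).
Definition zeroM : M3 := mkM vzero vzero vzero.
Definition adjM (A : M3) : M3 := trM (mkM (cross (r2 A) (r3 A)) (cross (r3 A) (r1 A)) (cross (r1 A) (r2 A))).
Definition axial (A : M3) : V3 := mk3 (v2 (r3 A)) (v3 (r1 A)) (v1 (r2 A)).

Ltac vunf1 := unfold madd, zeroM, adjM, axial, mlin, vadd, vsub, vscal, vzero, dot, cross, mv, trM, mm, idM, detM, r1, r2, r3, v1, v2, v3 in *; cbn [fst snd mk3 mkM] in *.
Ltac vunf2 := do 4 vunf1.

Lemma inj3 (a b c d e f : C) : (((a, b), c) : V3) = ((d, e), f) -> a = d /\ b = e /\ c = f.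
Proof. intros H. inversion H. auto. Qed.
Lemma inj9 (a b c d e f g h i a' b' c' d' e' f' g' h' i' : C) :
  (((((a, b), c), ((d, e), f)), ((g, h), i)) : M3) = ((((a', b'), c'), ((d', e'), f')), ((g', h'), i')) ->
  a = a' /\ b = b' /\ c = c' /\ d = d' /\ e = e' /\ f = f' /\ g = g' /\ h = h' /\ i = i'.
Proof. intros H. inversion H. repeat split. Qed.

Lemma mm_assoc A B C0 : mm A (mm B C0) = mm (mm A B) C0.
Proof. dv; vunf2; apply M3eq; ring. Qed.
Lemma mm_id_l A : mm idM A = A.
Proof. dv; vunf2; apply M3eq; ring. Qed.
Lemma mm_id_r A : mm A idM = A.
Proof. dv; vunf2; apply M3eq; ring. Qed.

Lemma RRt (R : M3) : mm (trM R) R = idM -> detM R = RtoC 1 -> mm R (trM R) = idM.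
Proof.
  intros H1 H2.
  assert (E1 : mm R (adjM R) = idM).
  { transitivity (mlin (detM R) idM (RtoC 0) idM).
    - clear. dv; vunf2. apply M3eq; ring.
    - rewrite H2. clear. vunf2. apply M3eq; ring. }
  assert (E2 : trM R = adjM R).
  { rewrite <- (mm_id_r (trM R)), <- E1, mm_assoc, H1, mm_id_l. reflexivity. }
  rewrite E2. exact E1.
Qed.

Lemma addeq0 (a b : C) : a + b = RtoC 0 -> a = - b.
Proof. intros H. replace a with ((a + b) - b) by ring. rewrite H. ring. Qed.

Lemma half0' (x : C) : x + x = RtoC 0 -> x = RtoC 0.
Proof. intros H. assert (H2 : RtoC 2 <> RtoC 0) by (intro E; apply RtoC_inj in E; lra).
  replace x with ((x + x) / RtoC 2).
  - rewrite H. unfold Cdiv. ring.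
  - field. Qed.

Lemma skew_mv (W : M3) : madd (trM W) W = zeroM -> forall y, mv W y = cross (axial W) y.
Proof. intros H y. dv; vunf2. apply inj9 in H.
  destruct H as [E1 [E2 [E3 [E4 [E5 [E6 [E7 [E8 E9]]]]]]]].
  apply half0' in E1. apply half0' in E5. apply half0' in E9.
  apply addeq0 in E2. apply addeq0 in E3. apply addeq0 in E6.
  subst. apply V3eq; ring. Qed.

Lemma vadd_eq0 (p q : V3) : vadd p q = vzero -> q = vsub vzero p.
Proof. intros H. dv; vunf2. apply inj3 in H. destruct H as [E1 [E2 E3]].
  apply addeq0 in E1; apply addeq0 in E2; apply addeq0 in E3. subst. apply V3eq; ring. Qed.

Lemma par (N n : V3) : dot N N = RtoC 1 -> cross n N = vzero -> n = vscal (dot N n) N.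
Proof. intros H1 H2.
  assert (E : vscal (dot N N) n = vadd (cross N (cross n N)) (vscal (dot N n) N))
    by (clear; dv; vunf2; apply V3eq; ring).
  rewrite H1, H2 in E. transitivity (vscal (RtoC 1) n).
  - clear. dv; vunf2; apply V3eq; ring.
  - rewrite E. clear. dv; vunf2; apply V3eq; ring. Qed.

Lemma cross_tan (A B N : V3) : dot N A = RtoC 0 -> dot N B = RtoC 0 -> cross (cross A B) N = vzero.
Proof. intros H1 H2.
  transitivity (vsub (vscal (dot N A) B) (vscal (dot N B) A)).
  - clear. dv; vunf2; apply V3eq; ring.
  - rewrite H1, H2. clear. dv; vunf2; apply V3eq; ring. Qed.

Lemma mult0 (a b : C) : a * b = RtoC 0 -> a <> RtoC 0 -> b = RtoC 0.
Proof. intros H Ha. replace b with ((a * b) / a) by (field; auto). rewrite H. unfold Cdiv. ring. Qed.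

Lemma final_alg (R Ru Rv : M3) (X Xu Xv Tu Tv N z a b : V3) (du0 dv0 du1 dv1 : C) :
  mm (trM R) R = idM -> detM R = RtoC 1 ->
  madd (mm (trM Ru) R) (mm (trM R) Ru) = zeroM ->
  madd (mm (trM Rv) R) (mm (trM R) Rv) = zeroM ->
  vadd (mv Ru X) Tu = vzero -> vadd (mv Rv X) Tv = vzero ->
  mv Ru Xv = mv Rv Xu ->
  dot N N = RtoC 1 -> dot N Xu = RtoC 0 -> dot N Xv = RtoC 0 -> cross Xu Xv <> vzero ->
  dot (vsub z X) N = RtoC 0 ->
  - dot (vsub z X) (cross (vadd (vscal du0 (cross N (mv (trM R) (mv Ru N))))
                               (vscal dv0 (cross N (mv (trM R) (mv Rv N))))) N)
    + RtoC 2 * dot b N * dv1 = RtoC 0 ->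
  dot (vadd (vadd (mv (mlin du0 Ru dv0 Rv) z) (mv R (vadd (vscal du1 a) (vscal dv1 b))))
            (vadd (vscal du0 Tu) (vscal dv0 Tv)))
      (vadd (vadd (mv (mlin du0 Ru dv0 Rv) z) (mv R (vadd (vscal du1 a) (vscal dv1 b))))
            (vadd (vscal du0 Tu) (vscal dv0 Tv))) =
  dot (vadd (vscal du1 a) (vscal dv1 b)) (vadd (vscal du1 a) (vscal dv1 b))
   - RtoC 4 * (dot a N * dot b N) * du1 * dv1.
Proof.
  intros H1 H2 H3 H4 H5 H6 H7 H8 H9 H10 H11 H12 H13.
  apply vadd_eq0 in H5. apply vadd_eq0 in H6. subst Tu Tv.
  assert (RR := RRt R H1 H2).
  set (Wu := mm (trM R) Ru). set (Wv := mm (trM R) Rv).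
  assert (K1 : madd (trM Wu) Wu = zeroM).
  { replace (trM Wu) with (mm (trM Ru) R) by (unfold Wu; clear; dv; vunf2; apply M3eq; ring). exact H3. }
  assert (K2 : madd (trM Wv) Wv = zeroM).
  { replace (trM Wv) with (mm (trM Rv) R) by (unfold Wv; clear; dv; vunf2; apply M3eq; ring). exact H4. }
  assert (Ku := skew_mv Wu K1). assert (Kv := skew_mv Wv K2).
  set (wu := axial Wu) in *. set (wv := axial Wv) in *.
  set (n := cross Xu Xv) in *.
  assert (Tg1 : dot wu n = RtoC 0).
  { assert (E1 : dot (mv R Xu) (mv Ru Xv) = - dot wu n).
    { transitivity (dot Xu (mv Wu Xv)). unfold Wu; clear; dv; vunf2; ring.
      rewrite Ku. unfold n. clear. dv; vunf2; ring. }
    assert (E2 : dot (mv R Xu) (mv Rv Xu) = RtoC 0).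
    { transitivity (dot Xu (mv Wv Xu)). unfold Wv; clear; dv; vunf2; ring.
      rewrite Kv. clear. dv; vunf2; ring. }
    rewrite H7, E2 in E1. replace (dot wu n) with (- (- dot wu n)) by ring. rewrite <- E1. ring. }
  assert (Tg2 : dot wv n = RtoC 0).
  { assert (E1 : dot (mv R Xv) (mv Rv Xu) = dot wv n).
    { transitivity (dot Xv (mv Wv Xu)). unfold Wv; clear; dv; vunf2; ring.
      rewrite Kv. unfold n. clear. dv; vunf2; ring. }
    assert (E2 : dot (mv R Xv) (mv Ru Xv) = RtoC 0).
    { transitivity (dot Xv (mv Wu Xv)). unfold Wu; clear; dv; vunf2; ring.
      rewrite Ku. clear. dv; vunf2; ring. }
    rewrite <- H7, E2 in E1. auto. }
  assert (Pn := par N n H8 (cross_tan Xu Xv N H9 H10)).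
  assert (Nn : dot N n <> RtoC 0).
  { intro E. apply H11. fold n. rewrite Pn, E. clear. dv; vunf2; apply V3eq; ring. }
  assert (Tu0 : dot wu N = RtoC 0).
  { apply (mult0 (dot N n)); auto. rewrite <- Tg1. rewrite Pn at 2. clear. dv; vunf2; ring. }
  assert (Tv0 : dot wv N = RtoC 0).
  { apply (mult0 (dot N n)); auto. rewrite <- Tg2. rewrite Pn at 2. clear. dv; vunf2; ring. }
  set (y := vsub z X) in *.
  set (om := vadd (vscal du0 wu) (vscal dv0 wv)).
  set (dz := vadd (vscal du1 a) (vscal dv1 b)).
  (* dx1 = R (om x y + dz) *)
  assert (Dx : vadd (vadd (mv (mlin du0 Ru dv0 Rv) z) (mv R dz))
            (vadd (vscal du0 (vsub vzero (mv Ru X))) (vscal dv0 (vsub vzero (mv Rv X))))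
          = mv R (vadd (cross om y) dz)).
  { transitivity (vadd (mv R (mv (mlin du0 (mm (trM R) Ru) dv0 (mm (trM R) Rv)) y)) (mv R dz)).
    - transitivity (vadd (mv (mlin du0 (mm (mm R (trM R)) Ru) dv0 (mm (mm R (trM R)) Rv)) y) (mv R dz)).
      + rewrite RR, !mm_id_l. unfold y. clear. dv; vunf2; apply V3eq; ring.
      + clear. dv; vunf2; apply V3eq; ring.
    - fold Wu Wv. transitivity (mv R (vadd (vadd (vscal du0 (mv Wu y)) (vscal dv0 (mv Wv y))) dz)).
      + clear. dv; vunf2; apply V3eq; ring.
      + rewrite Ku, Kv. unfold om. clear. dv; vunf2; apply V3eq; ring. }
  rewrite Dx.
  assert (Iso : forall v, dot (mv R v) (mv R v) = dot v v).
  { intros v. transitivity (dot v (mv (mm (trM R) R) v)).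
    - clear. dv; vunf2; ring.
    - rewrite H1. clear. dv; vunf2; ring. }
  rewrite Iso.
  assert (Om : vadd (vscal du0 (cross N (mv (trM R) (mv Ru N))))
                    (vscal dv0 (cross N (mv (trM R) (mv Rv N)))) = om).
  { transitivity (vadd (vscal du0 (cross N (mv Wu N))) (vscal dv0 (cross N (mv Wv N)))).
    - unfold Wu, Wv. clear. dv; vunf2; apply V3eq; ring.
    - rewrite Ku, Kv.
      transitivity (vadd (vscal du0 (vsub (vscal (dot N N) wu) (vscal (dot N wu) N)))
                         (vscal dv0 (vsub (vscal (dot N N) wv) (vscal (dot N wv) N)))).
      + clear. dv; vunf2; apply V3eq; ring.
      + rewrite H8. replace (dot N wu) with (dot wu N) by (clear; dv; vunf2; ring).
        replace (dot N wv) with (dot wv N) by (clear; dv; vunf2; ring).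
        rewrite Tu0, Tv0. unfold om. clear. dv; vunf2; apply V3eq; ring. }
  rewrite Om in H13.
  assert (omN : dot N om = RtoC 0).
  { transitivity (du0 * dot wu N + dv0 * dot wv N). unfold om; clear; dv; vunf2; ring.
    rewrite Tu0, Tv0. ring. }
  assert (yN : dot N y = RtoC 0).
  { rewrite <- H12. clear. dv; vunf2; ring. }
  assert (Pl := par N (cross om y) H8 (cross_tan om y N omN yN)).
  set (lam := dot N (cross om y)) in *.
  assert (Hl : lam = - (RtoC 2 * dot b N * dv1)).
  { assert (E : dot y (cross om N) = - lam) by (unfold lam; clear; dv; vunf2; ring).
    rewrite E in H13. replace lam with (- - lam) by ring. rewrite <- (addeq0 _ _ H13). ring. }
  rewrite Pl. clearbody lam.
  transitivity (lam * lam * dot N N + RtoC 2 * lam * (du1 * dot a N + dv1 * dot b N) + dot dz dz).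
  - unfold dz. clear. dv; vunf2; ring.
  - rewrite H8, Hl. unfold dz. ring.
Qed.

Lemma iter_pu l f : iter_partial l (pu f) = iter_partial (l ++ cons true nil) f.
Proof. induction l as [|b l IH]; simpl; auto. destruct b; rewrite IH; reflexivity. Qed.
Lemma iter_pv l f : iter_partial l (pv f) = iter_partial (l ++ cons false nil) f.
Proof. induction l as [|b l IH]; simpl; auto. destruct b; rewrite IH; reflexivity. Qed.

Lemma holo_pu D f : holo D f -> holo D (pu f).
Proof. intros H l u v Hd. rewrite iter_pu. apply H; auto. Qed.
Lemma holo_pv D f : holo D f -> holo D (pv f).
Proof. intros H l u v Hd. rewrite iter_pv. apply H; auto. Qed.

Lemma holoV_pu D x : holoV D x -> holoV D (puV x).
Proof. intros [H1 [H2 H3]]. split; [|split]; apply holo_pu; auto. Qed.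
Lemma holoV_pv D x : holoV D x -> holoV D (pvV x).
Proof. intros [H1 [H2 H3]]. split; [|split]; apply holo_pv; auto. Qed.
Lemma holoM_pu D A : holoM D A -> holoM D (puM A).
Proof. intros [H1 [H2 H3]]. split; [|split]; apply holoV_pu; auto. Qed.
Lemma holoM_pv D A : holoM D A -> holoM D (pvM A).
Proof. intros [H1 [H2 H3]]. split; [|split]; apply holoV_pv; auto. Qed.

Lemma dV_eq p s L L' : dV p s L -> L = L' -> dV p s L'.
Proof. intros H E; subst; auto. Qed.
Lemma dM_eq A s L L' : dM A s L -> L = L' -> dM A s L'.
Proof. intros H E; subst; auto. Qed.

Lemma dM_tr A s A' : dM A s A' -> dM (fun y => trM (A y)) s (trM A').
Proof. intros [[a1 [a2 a3]] [[b1 [b2 b3]] [c1 [c2 c3]]]].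
  split; [|split]; split; [|split| |split| |split]; assumption. Qed.

Lemma dM_mm A B s A' B' : dM A s A' -> dM B s B' ->
  dM (fun y => mm (A y) (B y)) s (madd (mm A' (B s)) (mm (A s) B')).
Proof. intros HA HB. assert (HBt := dM_tr _ _ _ HB). destruct HA as [H1 [H2 H3]].
  split; [|split].
  - eapply dV_eq; [apply (dV_mv _ _ _ _ _ HBt H1) | ].
    clear; generalize (A s) (B s); intros; dv; vunf2; apply V3eq; ring.
  - eapply dV_eq; [apply (dV_mv _ _ _ _ _ HBt H2) | ].
    clear; generalize (A s) (B s); intros; dv; vunf2; apply V3eq; ring.
  - eapply dV_eq; [apply (dV_mv _ _ _ _ _ HBt H3) | ].
    clear; generalize (A s) (B s); intros; dv; vunf2; apply V3eq; ring.
Qed.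

Lemma dV_locconst G s G' c : dV G s G' -> @locally C_UniformSpace s (fun y => G y = c) -> G' = vzero.
Proof. intros [H1 [H2 H3]] Hl.
  assert (Z1 : is_derive (fun y => v1 (G y)) s (RtoC 0)).
  { apply (is_derive_locconst _ _ (v1 c)). generalize Hl; apply filter_imp. intros y E; rewrite E; auto. }
  assert (Z2 : is_derive (fun y => v2 (G y)) s (RtoC 0)).
  { apply (is_derive_locconst _ _ (v2 c)). generalize Hl; apply filter_imp. intros y E; rewrite E; auto. }
  assert (Z3 : is_derive (fun y => v3 (G y)) s (RtoC 0)).
  { apply (is_derive_locconst _ _ (v3 c)). generalize Hl; apply filter_imp. intros y E; rewrite E; auto. }
  assert (E1 := eq_trans (eq_sym (is_C_derive_unique _ _ _ H1)) (is_C_derive_unique _ _ _ Z1)).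
  assert (E2 := eq_trans (eq_sym (is_C_derive_unique _ _ _ H2)) (is_C_derive_unique _ _ _ Z2)).
  assert (E3 := eq_trans (eq_sym (is_C_derive_unique _ _ _ H3)) (is_C_derive_unique _ _ _ Z3)).
  rewrite <- (V3_eta G'), E1, E2, E3. reflexivity. Qed.

Lemma dM_locconst G s G' c : dM G s G' -> @locally C_UniformSpace s (fun y => G y = c) -> G' = zeroM.
Proof. intros [H1 [H2 H3]] Hl.
  assert (E1 := dV_locconst _ _ _ (r1 c) H1 ltac:(generalize Hl; apply filter_imp; intros y E; rewrite E; auto)).
  assert (E2 := dV_locconst _ _ _ (r2 c) H2 ltac:(generalize Hl; apply filter_imp; intros y E; rewrite E; auto)).
  assert (E3 := dV_locconst _ _ _ (r3 c) H3 ltac:(generalize Hl; apply filter_imp; intros y E; rewrite E; auto)).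
  destruct G' as [[g1 g2] g3]. unfold r1, r2, r3 in *; simpl in *. subst. reflexivity. Qed.

Lemma schwarzV D x u v : open2 D -> holoV D x -> D u v -> pvV (puV x) u v = puV (pvV x) u v.
Proof. intros Hop [H1 [H2 H3]] Hd. unfold pvV, puV. f_equal; unfold v1, v2, v3, mk3; cbn [fst snd];
  eapply schwarz_holo; eauto. Qed.

Lemma schwarzM D A u v : open2 D -> holoM D A -> D u v -> pvM (puM A) u v = puM (pvM A) u v.
Proof. intros Hop [H1 [H2 H3]] Hd. unfold pvM, puM. f_equal; unfold r1, r2, r3, mkM; cbn [fst snd];
  eapply schwarzV; eauto. Qed.

Lemma cancel3 (p q r : V3) : vadd (vadd p q) r = q -> vadd p r = vzero.
Proof. intros H. transitivity (vsub (vadd (vadd p q) r) q).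
  - clear. dv; vunf2; apply V3eq; ring.
  - rewrite H. clear. dv; vunf2; apply V3eq; ring. Qed.

Lemma cancel4 (a p q T : V3) : vadd (vadd a p) T = vzero -> vadd (vadd a q) T = vzero -> p = q.
Proof. intros H1 H2. transitivity (vadd (vsub (vadd (vadd a p) T) (vadd (vadd a q) T)) q).
  - clear. dv; vunf2; apply V3eq; ring.
  - rewrite H1, H2. clear. dv; vunf2; apply V3eq; ring. Qed.

Lemma def_u D0 x0 R0 t0 u v : deformation D0 x0 R0 t0 -> holoV D0 x0 -> D0 u v ->
  vadd (mv (puM R0 u v) (x0 u v)) (puV t0 u v) = vzero.
Proof. intros [HR [Ht Hd]] Hx HD. destruct (Hd u v HD) as [_ [Eu _]].
  assert (L := dV_add _ _ _ _ _ (dV_mv _ _ _ _ _ (dM_holo_u D0 R0 u v HR HD) (dV_holo_u D0 x0 u v Hx HD))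
     (dV_holo_u D0 t0 u v Ht HD)).
  rewrite (puV_of (fun a b => vadd (mv (R0 a b) (x0 a b)) (t0 a b)) u v _ L) in Eu.
  apply cancel3 in Eu. exact Eu. Qed.

Lemma def_v D0 x0 R0 t0 u v : deformation D0 x0 R0 t0 -> holoV D0 x0 -> D0 u v ->
  vadd (mv (pvM R0 u v) (x0 u v)) (pvV t0 u v) = vzero.
Proof. intros [HR [Ht Hd]] Hx HD. destruct (Hd u v HD) as [_ [_ Ev]].
  assert (L := dV_add _ _ _ _ _ (dV_mv _ _ _ _ _ (dM_holo_v D0 R0 u v HR HD) (dV_holo_v D0 x0 u v Hx HD))
     (dV_holo_v D0 t0 u v Ht HD)).
  rewrite (pvV_of (fun a b => vadd (mv (R0 a b) (x0 a b)) (t0 a b)) u v _ L) in Ev.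
  apply cancel3 in Ev. exact Ev. Qed.

Lemma skew_u D0 x0 R0 t0 u v : open2 D0 -> deformation D0 x0 R0 t0 -> D0 u v ->
  madd (mm (trM (puM R0 u v)) (R0 u v)) (mm (trM (R0 u v)) (puM R0 u v)) = zeroM.
Proof. intros Hop Hdef HD. pose proof Hdef as [HR [Ht Hd]].
  assert (dR := dM_holo_u D0 R0 u v HR HD).
  apply (dM_locconst _ _ _ idM (dM_mm _ _ _ _ _ (dM_tr _ _ _ dR) dR)).
  generalize (open2_u D0 u v Hop HD). apply filter_imp. intros y Hy.
  destruct (Hd y v Hy) as [[S _] _]. exact S. Qed.

Lemma skew_v D0 x0 R0 t0 u v : open2 D0 -> deformation D0 x0 R0 t0 -> D0 u v ->
  madd (mm (trM (pvM R0 u v)) (R0 u v)) (mm (trM (R0 u v)) (pvM R0 u v)) = zeroM.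
Proof. intros Hop Hdef HD. pose proof Hdef as [HR [Ht Hd]].
  assert (dR := dM_holo_v D0 R0 u v HR HD).
  apply (dM_locconst _ _ _ idM (dM_mm _ _ _ _ _ (dM_tr _ _ _ dR) dR)).
  generalize (open2_v D0 u v Hop HD). apply filter_imp. intros y Hy.
  destruct (Hd u y Hy) as [[S _] _]. exact S. Qed.

Lemma mixed D0 x0 R0 t0 u v : open2 D0 -> deformation D0 x0 R0 t0 -> holoV D0 x0 -> D0 u v ->
  mv (puM R0 u v) (pvV x0 u v) = mv (pvM R0 u v) (puV x0 u v).
Proof. intros Hop Hdef Hx HD. pose proof Hdef as [HR [Ht Hd]].
  assert (G := dV_add _ _ _ _ _
     (dV_mv _ _ _ _ _ (dM_holo_v D0 (puM R0) u v (holoM_pu D0 R0 HR) HD) (dV_holo_v D0 x0 u v Hx HD))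
     (dV_holo_v D0 (puV t0) u v (holoV_pu D0 t0 Ht) HD)).
  apply dV_locconst with (c := vzero) in G.
  2:{ generalize (open2_v D0 u v Hop HD). apply filter_imp. intros y Hy. apply (def_u D0 x0 R0 t0); auto. }
  assert (H := dV_add _ _ _ _ _
     (dV_mv _ _ _ _ _ (dM_holo_u D0 (pvM R0) u v (holoM_pv D0 R0 HR) HD) (dV_holo_u D0 x0 u v Hx HD))
     (dV_holo_u D0 (pvV t0) u v (holoV_pv D0 t0 Ht) HD)).
  apply dV_locconst with (c := vzero) in H.
  2:{ generalize (open2_u D0 u v Hop HD). apply filter_imp. intros y Hy. apply (def_v D0 x0 R0 t0); auto. }
  rewrite (schwarzM D0 R0 u v Hop HR HD), (schwarzV D0 t0 u v Hop Ht HD) in G.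
  exact (cancel4 _ _ _ _ G H). Qed.

Lemma comb (al be c1 c2 d1 d2 e1 e2 f1 f2 : C) (Ru Rv R : M3) (z a b Tu Tv : V3) :
 vadd (vscal al (vadd (vadd (mv (mlin c1 Ru d1 Rv) z) (mv R (vadd (vscal e1 a) (vscal f1 b))))
                      (vadd (vscal c1 Tu) (vscal d1 Tv))))
      (vscal be (vadd (vadd (mv (mlin c2 Ru d2 Rv) z) (mv R (vadd (vscal e2 a) (vscal f2 b))))
                      (vadd (vscal c2 Tu) (vscal d2 Tv)))) =
 vadd (vadd (mv (mlin (al * c1 + be * c2) Ru (al * d1 + be * d2) Rv) z)
            (mv R (vadd (vscal (al * e1 + be * e2) a) (vscal (al * f1 + be * f2) b))))
      (vadd (vscal (al * c1 + be * c2) Tu) (vscal (al * d1 + be * d2) Tv)).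
Proof. dv; vunf2; apply V3eq; ring. Qed.

Theorem mainTheorem3 (D0 D1 : C -> C -> Prop) (x0 N0 xz : C -> C -> V3) :
  surface D0 x0 -> unit_normal D0 x0 N0 -> nondevelopable D0 x0 N0 ->
  surface D1 xz ->
  (forall u0 v0 u1 v1, inS D0 D1 x0 N0 xz u0 v0 u1 v1 ->
     Ffun N0 xz u0 v0 u1 v1 <> RtoC 0) ->
  (forall u0 v0 u1 v1, inS D0 D1 x0 N0 xz u0 v0 u1 v1 ->
     key_identity x0 N0 xz u0 v0 u1 v1) ->
  (forall u0 v0 u1 v1 w0 w1 : C, inS D0 D1 x0 N0 xz u0 v0 u1 v1 ->
     w0 * C_derive (fun s => Sfun x0 N0 xz s v0 u1 v1) u0
       + w1 * C_derive (fun t => Sfun x0 N0 xz u0 t u1 v1) v0 = RtoC 0 ->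
     w0 * C_derive (fun s => Ffun N0 xz s v0 u1 v1) u0
       + w1 * C_derive (fun t => Ffun N0 xz u0 t u1 v1) v0 = RtoC 0)
  /\
  (forall (R0 : C -> C -> M3) (t0 : C -> C -> V3),
     deformation D0 x0 R0 t0 ->
     forall (D : C -> C -> Prop) (U0 V0 U1 V1 : C -> C -> C),
       leaf D0 D1 x0 N0 xz R0 D U0 V0 U1 V1 ->
       forall s t al be : C, D s t ->
         let x1 := x1_leaf xz R0 t0 U0 V0 U1 V1 in
         let dx1 := vadd (vscal al (puV x1 s t)) (vscal be (pvV x1 s t)) in
         let du1 := al * pu U1 s t + be * pv U1 s t in
         let dv1 := al * pu V1 s t + be * pv V1 s t in
         let dxz := vadd (vscal du1 (puV xz (U1 s t) (V1 s t)))
                         (vscal dv1 (pvV xz (U1 s t) (V1 s t))) in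
         dot dx1 dx1 =
         dot dxz dxz
         - RtoC 4 * Ffun N0 xz (U0 s t) (V0 s t) (U1 s t) (V1 s t) * du1 * dv1).
Proof.
  intros [Hop0 [Hx0 Hcr]] Hun Hnd [Hop1 [Hxz _]] HF HK. split.
  - intros u0 v0 u1 v1 w0 w1 Hin Hw. pose proof Hin as [HD0 _].
    rewrite (part_u D0 x0 N0 xz u0 v0 u1 v1 Hop0 Hx0 Hun HD0 (HK _ _ _ _ Hin)).
    rewrite (part_v D0 x0 N0 xz u0 v0 u1 v1 Hop0 Hx0 Hun HD0 (HK _ _ _ _ Hin)).
    transitivity (dot (pvV (puV xz) u1 v1) (N0 u0 v0) *
      (w0 * C_derive (fun s => Sfun x0 N0 xz s v0 u1 v1) u0
       + w1 * C_derive (fun t => Sfun x0 N0 xz u0 t u1 v1) v0)).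
    + ring.
    + rewrite Hw. ring.
  - intros R0 t0 Hdef D U0 V0 U1 V1 Hleaf s t al be HDst. cbv zeta.
    destruct Hleaf as [HopD [HU0 [HV0 [HU1 [HV1 Hpt]]]]].
    destruct (Hpt s t HDst) as [[HD0 [HD1 HS]] Hpf].
    pose proof Hdef as [HR [Ht Hd]].
    assert (dU0s := cdiff_pu U0 s t (HU0 nil s t HDst)).
    assert (dV0s := cdiff_pu V0 s t (HV0 nil s t HDst)).
    assert (dU1s := cdiff_pu U1 s t (HU1 nil s t HDst)).
    assert (dV1s := cdiff_pu V1 s t (HV1 nil s t HDst)).
    assert (dU0t := cdiff_pv U0 s t (HU0 nil s t HDst)).
    assert (dV0t := cdiff_pv V0 s t (HV0 nil s t HDst)).
    assert (dU1t := cdiff_pv U1 s t (HU1 nil s t HDst)).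
    assert (dV1t := cdiff_pv V1 s t (HV1 nil s t HDst)).
    set (u0 := U0 s t) in *. set (v0 := V0 s t) in *.
    set (u1 := U1 s t) in *. set (v1 := V1 s t) in *.
    assert (Xs : puV (x1_leaf xz R0 t0 U0 V0 U1 V1) s t =
      vadd (vadd (mv (mlin (pu U0 s t) (puM R0 u0 v0) (pu V0 s t) (pvM R0 u0 v0)) (xz u1 v1))
                 (mv (R0 u0 v0) (vadd (vscal (pu U1 s t) (puV xz u1 v1)) (vscal (pu V1 s t) (pvV xz u1 v1)))))
           (vadd (vscal (pu U0 s t) (puV t0 u0 v0)) (vscal (pu V0 s t) (pvV t0 u0 v0)))).
    { apply puV_of. unfold x1_leaf.
      apply (dV_add (fun y => mv (R0 (U0 y t) (V0 y t)) (xz (U1 y t) (V1 y t))) (fun y => t0 (U0 y t) (V0 y t))).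
      - apply (dV_mv (fun y => R0 (U0 y t) (V0 y t)) (fun y => xz (U1 y t) (V1 y t))).
        + apply (dM_chain D0 R0 (fun y => U0 y t) (fun y => V0 y t)); auto.
        + apply (dV_chain D1 xz (fun y => U1 y t) (fun y => V1 y t)); auto.
      - apply (dV_chain D0 t0 (fun y => U0 y t) (fun y => V0 y t)); auto. }
    assert (Xt : pvV (x1_leaf xz R0 t0 U0 V0 U1 V1) s t =
      vadd (vadd (mv (mlin (pv U0 s t) (puM R0 u0 v0) (pv V0 s t) (pvM R0 u0 v0)) (xz u1 v1))
                 (mv (R0 u0 v0) (vadd (vscal (pv U1 s t) (puV xz u1 v1)) (vscal (pv V1 s t) (pvV xz u1 v1)))))
           (vadd (vscal (pv U0 s t) (puV t0 u0 v0)) (vscal (pv V0 s t) (pvV t0 u0 v0)))).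
    { apply pvV_of. unfold x1_leaf.
      apply (dV_add (fun y => mv (R0 (U0 s y) (V0 s y)) (xz (U1 s y) (V1 s y))) (fun y => t0 (U0 s y) (V0 s y))).
      - apply (dV_mv (fun y => R0 (U0 s y) (V0 s y)) (fun y => xz (U1 s y) (V1 s y))).
        + apply (dM_chain D0 R0 (fun y => U0 s y) (fun y => V0 s y)); auto.
        + apply (dV_chain D1 xz (fun y => U1 s y) (fun y => V1 s y)); auto.
      - apply (dV_chain D0 t0 (fun y => U0 s y) (fun y => V0 s y)); auto. }
    rewrite Xs, Xt, comb. unfold Ffun.
    destruct (Hd u0 v0 HD0) as [[SO1 SO2] _].
    destruct Hun as [HN Hun']. destruct (Hun' u0 v0 HD0) as [NN [NXu NXv]].
    apply (final_alg _ _ _ (x0 u0 v0) (puV x0 u0 v0) (pvV x0 u0 v0)); auto.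
    + apply (skew_u D0 x0 R0 t0); auto.
    + apply (skew_v D0 x0 R0 t0); auto.
    + apply (def_u D0 x0 R0 t0); auto.
    + apply (def_v D0 x0 R0 t0); auto.
    + apply (mixed D0 x0 R0 t0); auto.
    + specialize (Hpf al be). unfold pfaff_form, om_u, om_v in Hpf. exact Hpf.
Qed.
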